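(* For every pair of integers $h,n\geq 2$, the trivial subgroup $\{(id,id)\}$ of $S_h\times S_n$ is an anonymity group, a neutrality group and a symmetry group with respect to $(h,n)$.
   Context: Permutations compose as $(\sigma\tau)(x)=\sigma(\tau(x))$. Let $G=S_h\times S_n$ and $\mathcal{P}=(S_n)^h$ (preference profiles), with $G$ acting by $(p^{(\varphi,\psi)})_i=\psi\,p_{\varphi^{-1}(i)}$. A social preference function (SPF) is any $F:\mathcal{P}\to S_n$. Its symmetry group is $G(F)=\{(\varphi,\psi)\in G: F(p^{(\varphi,\psi)})=\psi F(p)\ \forall p\}$, its anonymity group is $G_1(F)=G(F)\cap(S_h\times\{id\})$ and its neutrality group is $G_2(F)=G(F)\cap(\{id\}\times S_n)$. A subgroup $U$ is a symmetry (resp. anonymity, neutrality) group with respect to $(h,n)$ if $U=G(F)$ (resp. $U=G_1(F)$, $U=G_2(F)$) for some SPF $F$. *)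

(* Defs.v *)
From mathcomp Require Import all_boot all_fingroup.
Set Implicit Arguments.
Unset Strict Implicit.
Unset Printing Implicit Defensive.
Local Open Scope group_scope.

(* Convention: the paper composes as (s t)(x) = s (t x); in mathcomp
   (s * t) x = t (s x).  Hence the paper's composite psi o p is
   written here as (p * psi) (mathcomp product), and the paper's
   psi F(p) as F p * psi. *)

Definition profile (h n : nat) := {ffun 'I_h -> 'S_n}.

Definition SPF (h n : nat) := profile h n -> 'S_n.

Definition act_profile (h n : nat) (p : profile h n) (g : 'S_h * 'S_n)
  : profile h n :=
  [ffun i => p (g.1^-1 i) * g.2].

Definition symgroup (h n : nat) (F : SPF h n) : {set 'S_h * 'S_n} :=
  [set g : 'S_h * 'S_n | [forall p : profile h n,
      F (act_profile p g) == F p * g.2]].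

Definition anongroup (h n : nat) (F : SPF h n) : {set 'S_h * 'S_n} :=
  symgroup F :&: [set g : 'S_h * 'S_n | g.2 == 1].

Definition neutgroup (h n : nat) (F : SPF h n) : {set 'S_h * 'S_n} :=
  symgroup F :&: [set g : 'S_h * 'S_n | g.1 == 1].

Definition is_symmetry_group (h n : nat) (U : {set 'S_h * 'S_n}) :=
  exists F : SPF h n, symgroup F = U.
Definition is_anonymity_group (h n : nat) (U : {set 'S_h * 'S_n}) :=
  exists F : SPF h n, anongroup F = U.
Definition is_neutrality_group (h n : nat) (U : {set 'S_h * 'S_n}) :=
  exists F : SPF h n, neutgroup F = U.

Definition trivial_sub (h n : nat) : {set 'S_h * 'S_n} := [set (1, 1)].

(* Main.v *)
Require Import Defs.
From mathcomp Require Import all_boot all_fingroup.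

Set Implicit Arguments.
Unset Strict Implicit.
Unset Printing Implicit Defensive.

Section Aux.
Local Open Scope group_scope.

Lemma incr_ge (h : nat) (f : 'I_h -> 'I_h) :
  (forall a b : 'I_h, (a < b)%N -> (f a < f b)%N) -> forall i : 'I_h, (i <= f i)%N.
Proof.
move=> Hf.
suff H : forall k (i : 'I_h), nat_of_ord i = k -> (k <= f i)%N by move=> i; exact: H.
elim=> [|k IH] i Hi; first by [].
have hk : (k < h)%N by rewrite -Hi ltnW // ltn_ord.
have := IH (Ordinal hk) erefl.
have := Hf (Ordinal hk) i; rewrite Hi /= ltnSn => /(_ isT).
by move=> A B; exact: leq_ltn_trans B A.
Qed.

Lemma strict_of_mono (h : nat) (t : 'S_h) :
  (forall a b : 'I_h, (a <= b)%N -> (t a <= t b)%N) ->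
  forall a b : 'I_h, (a < b)%N -> (t a < t b)%N.
Proof.
move=> Hm a b Hab.
have H1 := Hm a b (ltnW Hab).
rewrite ltn_neqAle H1 andbT.
apply/negP => /eqP E.
have E2 : t a = t b by apply: val_inj.
move: E2 => /perm_inj E3.
by rewrite E3 ltnn in Hab.
Qed.

Lemma mono_perm_id (h : nat) (t : 'S_h) :
  (forall a b : 'I_h, (a <= b)%N -> (t a <= t b)%N) -> t = 1.
Proof.
move=> Hm.
have Hmi : forall a b : 'I_h, (a <= b)%N -> (t^-1 a <= t^-1 b)%N.
  move=> a b Hab; case: (leqP (t^-1 a) (t^-1 b)) => // Hlt.
  have := Hm _ _ (ltnW Hlt); rewrite !permKV => Hba.
  have E : a = b by apply/val_inj/eqP; rewrite eqn_leq Hab Hba.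
  by rewrite E ltnn in Hlt.
have G1 := incr_ge (strict_of_mono Hm).
have G2 := incr_ge (strict_of_mono Hmi).
apply/permP => i; rewrite perm1; apply/val_inj/eqP.
rewrite eqn_leq G1 andbT.
by have := G2 (t i); rewrite permK.
Qed.

Definition P (h n : nat) (s : 'S_n) (q : profile h n) : bool :=
  [forall a : 'I_h, forall b : 'I_h,
     (nat_of_ord a <= nat_of_ord b)%N ==> (q b == s) ==> (q a == s)].

Definition Fdef (h n : nat) (s : 'S_n) : SPF h n := fun q =>
  if P s q then s else 1.

Lemma sym_Fdef (h n : nat) (s : 'S_n) : s != 1 ->
  symgroup (@Fdef h n s) = [set (1, 1)].
Proof.
move=> Hs; apply/setP => -[phi psi]; rewrite !inE.
apply/idP/idP; last first.
  move/eqP => [-> ->]; apply/forallP => p.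
  have -> : act_profile p (1, 1) = p by apply/ffunP => i; rewrite ffunE /= invg1 perm1 mulg1.
  by rewrite mulg1.
move/forallP => H.
have Hpsi : psi = 1.
  have := H [ffun _ => 1]; rewrite /Fdef.
  have -> : P s [ffun _ : 'I_h => (1 : 'S_n)] = true.
    by apply/forallP => a; apply/forallP => b; rewrite !ffunE eq_sym (negbTE Hs) !implybT.
  have -> : P s (act_profile [ffun _ : 'I_h => (1 : 'S_n)] (phi, psi)) = true.
    apply/forallP => a; apply/forallP => b; rewrite !ffunE.
    by apply/implyP => _; apply/implyP.
  by move/eqP => /= E; apply: (mulgI s); rewrite mulg1 -E.
subst psi; suff -> : phi = 1 by [].
symmetry.
suff : phi^-1 = 1 by move/(congr1 invg); rewrite invgK invg1 => ->.
apply: mono_perm_id => a b Hab.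
pose j := phi^-1 b.
pose q : profile h n := [ffun i : 'I_h => if (nat_of_ord i <= nat_of_ord j)%N then s else 1].
have := H q; rewrite /Fdef.
have -> : P s q = true.
  apply/forallP => x; apply/forallP => y; rewrite !ffunE.
  apply/implyP => Hxy; case: ifP => Hy; last by rewrite eq_sym (negbTE Hs).
  by rewrite (leq_trans Hxy Hy) eqxx.
case: ifP => Hc1; last by rewrite mulg1 eq_sym (negbTE Hs).
move=> _; move: Hc1 => /forallP /(_ a) /forallP /(_ b).
rewrite Hab !ffunE /= !mulg1 leqnn eqxx /=.
by case: ifP => // _; rewrite eq_sym (negbTE Hs).
Qed.

End Aux.

Theorem mainTheorem7 (h n : nat) (hh : (2 <= h)%N) (hn : (2 <= n)%N) :
  is_anonymity_group (trivial_sub h n) /\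
  is_neutrality_group (trivial_sub h n) /\
  is_symmetry_group (trivial_sub h n).
Proof.
have [s Hs] : exists s : 'S_n, s != 1%g.
  case: n hn => [|[|n']] // _.
  exists (tperm ord0 (inord 1)); apply/eqP => /permP /(_ ord0).
  rewrite tpermL perm1 => /(congr1 val); rewrite /= inordK //.
have E := @sym_Fdef h n s Hs.
rewrite /trivial_sub; split; [|split]; exists (@Fdef h n s);
  rewrite /anongroup /neutgroup ?E //;
  by apply/setP => x; rewrite !inE; case: eqP => [->|] //=; rewrite eqxx.
Qed.
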